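(* Consider the planar system \[ \frac{dx}{dt}= x\Big(1-\frac{x}{\gamma}\Big)-\frac{xy}{(1+\alpha\xi)(\omega x^2+1)+x},\qquad \frac{dy}{dt}= \frac{\delta\big(x+\xi(\omega x^2+1)\big)y}{(1+\alpha\xi)(\omega x^2+1)+x}-my-\epsilon y^2, \] with positive parameters $\gamma,\alpha,\xi,\omega,\delta,m,\epsilon$ satisfying $\delta>m$. The equilibrium $E_2=\Big(0,\frac{\delta\xi-m(1+\alpha\xi)}{\epsilon(1+\alpha\xi)}\Big)$ lies in the positive $xy$-quadrant and is a stable node if $\delta\xi-m(1+\alpha\xi)>0$ and $\delta\xi-m(1+\alpha\xi)>\epsilon(1+\alpha\xi)^2$; it lies in the positive $xy$-quadrant and is a saddle if $\delta\xi-m(1+\alpha\xi)>0$ and $\delta\xi-m(1+\alpha\xi)<\epsilon(1+\alpha\xi)^2$.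
   Context: $x$ and $y$ are prey (pest) and predator densities; $\alpha$ and $\xi$ are the quality and quantity of additional food for predators, $\epsilon$ is the predator intra-specific competition coefficient. Stability type refers to the linearization (Jacobian) at the equilibrium. *)

(* Defs.v *)
From HB Require Import structures.
From mathcomp Require Import all_boot all_order all_algebra.
From mathcomp Require Import all_classical all_reals all_analysis.
Set Implicit Arguments. Unset Strict Implicit. Unset Printing Implicit Defensive.
Import Order.TTheory GRing.Theory Num.Theory.
Local Open Scope ring_scope.

Section Model.
Variables (R : realType) (gamma alpha xi omega delta m eps : R).

Definition den (x : R) : R := (1 + alpha * xi) * (omega * x ^+ 2 + 1) + x.

Definition fx (x y : R) : R := x * (1 - x / gamma) - x * y / den x.

Definition fy (x y : R) : R :=
  delta * (x + xi * (omega * x ^+ 2 + 1)) * y / den x - m * y - eps * y ^+ 2.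

Definition vf_jacobian (x0 y0 : R) : 'M[R]_2 :=
  \matrix_(i < 2, j < 2)
    let f := if i == 0 then fx else fy in
    if j == 0 then derive1 (fun t => f t y0) x0 else derive1 (fun t => f x0 t) y0.

Definition E2y : R := (delta * xi - m * (1 + alpha * xi)) / (eps * (1 + alpha * xi)).
End Model.

Definition stable_node (R : realType) (J : 'M[R]_2) : Prop :=
  exists l1 l2 : R, l1 < 0 /\ l2 < 0 /\
    char_poly J = ('X - l1%:P) * ('X - l2%:P).

Definition saddle (R : realType) (J : 'M[R]_2) : Prop :=
  exists l1 l2 : R, l1 < 0 /\ 0 < l2 /\
    char_poly J = ('X - l1%:P) * ('X - l2%:P).

(* Main.v *)
Require Import Defs.
From HB Require Import structures.
From mathcomp Require Import all_boot all_order all_algebra.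
From mathcomp Require Import all_classical all_reals all_analysis.
From mathcomp Require Import ring.
Import Order.TTheory GRing.Theory Num.Theory.
Local Open Scope ring_scope.

Theorem mainTheorem4 (R : realType) (gamma alpha xi omega delta m eps : R) :
  0 < gamma -> 0 < alpha -> 0 < xi -> 0 < omega -> 0 < delta -> 0 < m ->
  0 < eps -> m < delta ->
  let y2 := E2y alpha xi delta m eps in
  let J := vf_jacobian gamma alpha xi omega delta m eps 0 y2 in
  (* E2 is an equilibrium *)
  (fx gamma alpha xi omega 0 y2 = 0 /\ fy alpha xi omega delta m eps 0 y2 = 0) /\
  (0 < delta * xi - m * (1 + alpha * xi) ->
   delta * xi - m * (1 + alpha * xi) > eps * (1 + alpha * xi) ^+ 2 ->
   0 < y2 /\ stable_node J) /\
  (0 < delta * xi - m * (1 + alpha * xi) ->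
   delta * xi - m * (1 + alpha * xi) < eps * (1 + alpha * xi) ^+ 2 ->
   0 < y2 /\ saddle J).
Proof.
move=> hg ha hxi hom hde hm he hmd y2 J.
have hA : 0 < 1 + alpha * xi by rewrite addr_gt0 // mulr_gt0.
have hA0 : 1 + alpha * xi != 0 by rewrite gt_eqF.
have he0 : eps != 0 by rewrite gt_eqF.
have den0 : den alpha xi omega 0 = 1 + alpha * xi.
  by rewrite /den expr0n /= mulr0 add0r mulr1 addr0.
have Ey2 : y2 = (delta * xi - m * (1 + alpha * xi)) / (eps * (1 + alpha * xi)) by [].
have J01 : J 0 1 = 0.
  rewrite /J /vf_jacobian !mxE /=.
  have -> : (fun t => fx gamma alpha xi omega 0 t) = cst 0.
    by apply/funext => t; rewrite /fx /= !mul0r subrr.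
  by rewrite derive1_cst.
have J11 : J 1 1 = - (delta * xi - m * (1 + alpha * xi)) / (1 + alpha * xi).
  rewrite /J /vf_jacobian !mxE /=.
  pose s : {poly R} := (delta * xi / (1 + alpha * xi) - m) *: 'X - eps *: 'X^2.
  have -> : (fun t => fy alpha xi omega delta m eps 0 t) = horner s.
    apply/funext => t; rewrite /fy den0 /s !hornerE /=.
    by field.
  rewrite derive1E (@derive_val _ _ _ _ _ _ _ (is_derive_poly s y2)).
  rewrite /s !poly.derivE !hornerE Ey2 /=; field.
  by rewrite he0 hA0.
have J00 : J 0 0 = 1 - (delta * xi - m * (1 + alpha * xi)) / (eps * (1 + alpha * xi) ^+ 2).
  rewrite /J /vf_jacobian !mxE /=.
  pose p : {poly R} := 'X - gamma^-1 *: 'X^2.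
  pose r : {poly R} := y2 *: 'X.
  pose q : {poly R} := ((1 + alpha * xi) * omega) *: 'X^2 + 'X + (1 + alpha * xi)%:P.
  have -> : (fun t => fx gamma alpha xi omega t y2) =
            (horner p - (horner r * (fun t => (horner q t)^-1)))%R.
    apply/funext => t.
    change (fx gamma alpha xi omega t y2 = p.[t] - r.[t] * (q.[t])^-1).
    rewrite /fx /den /p /r /q !(hornerD, hornerN, hornerZ, hornerX, hornerXn, hornerC, hornerM).
    congr (_ - _ * _^-1); ring.
  have q0 : q.[0] != 0.
    by rewrite /q !(hornerD, hornerN, hornerZ, hornerX, hornerXn, hornerC) expr0n /= !mulr0 !add0r.
  have H := is_deriveB (is_derive_poly p 0)
     (is_deriveM (is_derive_poly r 0) (is_deriveV q0 (is_derive_poly q 0))).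
  rewrite derive1E (@derive_val _ _ _ _ _ _ _ H).
  rewrite /p /r /q !poly.derivE !(hornerD, hornerN, hornerZ, hornerX, hornerXn, hornerC, hornerM) Ey2 /= expr0n /= !(mulr0, mul0r, scale0r, add0r, addr0, mulr1, subr0).
  have sc : forall a b : R, a *: b = a * b by []. rewrite sc; field. by rewrite he0 hA0.
have cp : char_poly J = ('X - (J 0 0)%:P) * ('X - (J 1 1)%:P).
  rewrite char_poly_trig; last first.
    apply/is_trig_mxP => i j; case: i => [[|[|//]] ?]; case: j => [[|[|//]] ?] //= _.
    by rewrite -J01; congr (J _ _); apply/val_inj.
  rewrite !big_ord_recr big_ord0 /= mul1r.
  have -> : widen_ord (leqnSn 1) ord_max = 0 :> 'I_2 by apply/val_inj.
  by have -> : ord_max = 1 :> 'I_2 by apply/val_inj.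
have y2pos : 0 < delta * xi - m * (1 + alpha * xi) -> 0 < y2.
  by move=> hD; rewrite Ey2 divr_gt0 // mulr_gt0.
split; first split.
- by rewrite /fx !mul0r subrr.
  rewrite /fy den0 Ey2 /=; field.
  by rewrite he0 hA0.
split=> hD hc; split; [exact: y2pos| |exact: y2pos|].
- exists (J 0 0), (J 1 1); split; last split => //.
  + rewrite J00 subr_lt0 ltr_pdivlMr ?mul1r //.
    by rewrite mulr_gt0 // exprn_gt0.
  + by rewrite J11 mulNr oppr_lt0 divr_gt0.
- exists (J 1 1), (J 0 0); split; last split.
  + by rewrite J11 mulNr oppr_lt0 divr_gt0.
  + rewrite J00 subr_gt0 ltr_pdivrMr ?mul1r //.
    by rewrite mulr_gt0 // exprn_gt0.
  + by rewrite cp mulrC.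
Qed.
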